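(* Let $X$ be a unital prime Banach algebra containing a nontrivial idempotent element. Let $h:X\to X$ be an odd mapping and $\phi,\psi:X^2\to[0,\infty)$ satisfy $$\|h(xyx)-h(x)yx-xh(y)x-xyh(x)\|\le\psi(x,y),$$ $$\|h(x+my)+h(x-my)-2h(x)+2m^2h(y)-m^2h(2y)\|\le\phi(x,y)$$ for all $x,y\in X$, for some fixed nonzero even integer $m$. Assume that for all $x,y\in X$ $$\Phi(x):=\sum_{k=0}^{\infty}2^{-k}\phi(0,2^kx)<\infty,\qquad \liminf_{k\to\infty}2^{-3k}\psi(2^kx,2^ky)=0,\qquad \liminf_{k\to\infty}2^{-2k}\psi(2^kx,y)=0.$$ Then $h$ is a derivation.
   Context: An algebra $X$ is prime if it is nontrivial and for any $a,b\in X$, $arb=0$ for all $r\in X$ implies $a=0$ or $b=0$. A nontrivial idempotent is an element $e$ with $e^2=e$, $e\neq0$, $e\neq\mathbf{1}$. A derivation is an additive map $D:X\to X$ with $D(xy)=D(x)y+xD(y)$ for all $x,y\in X$. *)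

(* Defs.v *)
From HB Require Import structures.
From mathcomp Require Import all_boot all_order all_algebra.
From mathcomp Require Import all_classical all_reals all_analysis.
Set Implicit Arguments. Unset Strict Implicit. Unset Printing Implicit Defensive.
Import Order.TTheory GRing.Theory Num.Theory.
Import numFieldNormedType.Exports.
Local Open Scope ring_scope.

(* A unital Banach algebra structure on a (real) Banach space X:
   an associative, bilinear, unital multiplication with submultiplicative norm.
   (HB cannot join the ring hierarchy with the normed-module hierarchy here,
   so the multiplication is packaged as a record over X.) *)
Record banach_alg (R : realType) (X : completeNormedModType R) := BanachAlg {
  bmul : X -> X -> X;
  bone : X;
  bmulA : forall x y z, bmul x (bmul y z) = bmul (bmul x y) z;
  bmul1x : forall x, bmul bone x = x;
  bmulx1 : forall x, bmul x bone = x;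
  bmulDl : forall x y z, bmul (x + y) z = bmul x z + bmul y z;
  bmulDr : forall x y z, bmul x (y + z) = bmul x y + bmul x z;
  bmulZl : forall (a : R) x y, bmul (a *: x) y = a *: bmul x y;
  bmulZr : forall (a : R) x y, bmul x (a *: y) = a *: bmul x y;
  bnormM_le : forall x y, `|bmul x y| <= `|x| * `|y|
}.

Section Defs.
Variables (R : realType) (X : completeNormedModType R) (A : banach_alg X).
Local Notation "x ** y" := (bmul A x y) (at level 40, left associativity).

Definition prime_alg : Prop :=
  bone A != 0 /\
  forall a b : X, (forall r : X, a ** r ** b = 0) -> a = 0 \/ b = 0.

Definition has_nontrivial_idempotent : Prop :=
  exists e : X, e ** e = e /\ e != 0 /\ e != bone A.

Definition derivation (D : X -> X) : Prop :=
  (forall x y, D (x + y) = D x + D y) /\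
  (forall x y, D (x ** y) = D x ** y + x ** D y).
End Defs.

Definition odd_map (X : zmodType) (h : X -> X) : Prop :=
  forall x, h (- x) = - h x.

(* Main.v *)
Require Import Defs.
From HB Require Import structures.
From mathcomp Require Import all_boot all_order all_algebra.
From mathcomp Require Import all_classical all_reals all_analysis.
From mathcomp Require Import zify ring lra.
From Stdlib Require Import Classical.
Import Order.TTheory GRing.Theory Num.Theory.
Import numFieldNormedType.Exports.
Local Open Scope classical_set_scope.
Local Open Scope ring_scope.

Definition Xr (R : realType) (X : completeNormedModType R) (A : banach_alg X) : Type := X.
Arguments Xr {R X} A.
HB.instance Definition _ (R : realType) (X : completeNormedModType R) (A : banach_alg X) :=
  GRing.Zmodule.on (Xr A).
Section XrS.
Variables (R : realType) (X : completeNormedModType R) (A : banach_alg X).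
Lemma xrA : associative (bmul A : Xr A -> Xr A -> Xr A). Proof. by move=> x y z; rewrite bmulA. Qed.
Lemma xrDl : left_distributive (bmul A : Xr A -> Xr A -> Xr A) +%R. Proof. by move=> x y z; rewrite bmulDl. Qed.
Lemma xrDr : right_distributive (bmul A : Xr A -> Xr A -> Xr A) +%R. Proof. by move=> x y z; rewrite bmulDr. Qed.
End XrS.
HB.instance Definition _ (R : realType) (X : completeNormedModType R) (A : banach_alg X) :=
  GRing.Zmodule_isPzRing.Build (Xr A) (@xrA R X A) (bmul1x A) (bmulx1 A) (@xrDl R X A) (@xrDr R X A).

Set Implicit Arguments. Unset Strict Implicit. Unset Printing Implicit Defensive.

Section Alg.
Variables (Rg : pzRingType) (d : Rg -> Rg).
Hypothesis tf2 : forall x : Rg, x + x = 0 -> x = 0.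
Hypothesis prm : forall a b : Rg, (forall r, a * r * b = 0) -> a = 0 \/ b = 0.
Hypothesis T : forall x y, d (x * y * x) = d x * y * x + x * d y * x + x * y * d x.

Record idp (p q : Rg) : Prop := Idp {
  i_pp : p * p = p; i_qq : q * q = q; i_pq : p * q = 0; i_qp : q * p = 0;
  i_1 : p + q = 1; i_p0 : p != 0; i_q0 : q != 0 }.

Lemma idp_sym p q : idp p q -> idp q p.
Proof. by case=> *; split => //; rewrite addrC. Qed.

Lemma i_ppl p q (H : idp p q) y : y * p * p = y * p.
Proof. by rewrite -mulrA (i_pp H). Qed.
Lemma i_pql p q (H : idp p q) y : y * p * q = 0.
Proof. by rewrite -mulrA (i_pq H) mulr0. Qed.

Ltac ns H := rewrite ?(mulrDl, mulrDr, mulrBl, mulrBr, mulrN, mulNr, mulr0, mul0r,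
  mulr1, mul1r, mulrA, i_pp H, i_ppl H, i_pq H, i_pql H, i_pp (idp_sym H),
  i_ppl (idp_sym H), i_pq (idp_sym H), i_pql (idp_sym H), addr0, add0r, subr0,
  sub0r, oppr0, opprK).

Lemma i_dec p q (H : idp p q) x : x = p * x * p + p * x * q + q * x * p + q * x * q.
Proof.
have -> : p * x * p + p * x * q + q * x * p + q * x * q = (p + q) * x * (p + q).
  by rewrite !mulrDl !mulrDr !addrA; congr (_ + _); rewrite -!addrA; congr (_ + _); rewrite addrC.
by rewrite (i_1 H) mul1r mulr1.
Qed.

Lemma lin3 (x : Rg) : x = x + x + x -> x = 0.
Proof.
move=> h; apply: tf2; apply/eqP; rewrite -(inj_eq (addrI x)) addr0 eq_sym addrA.
by rewrite -h.
Qed.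

Lemma d0 : d 0 = 0.
Proof. by have := T 0 0; rewrite !mulr0 !mul0r !addr0. Qed.

Lemma d1 : d 1 = 0.
Proof. by apply: lin3; have := T 1 1; rewrite !mulr1 !mul1r. Qed.

Lemma primeL (p a : Rg) : p != 0 -> (forall r, p * r * a = 0) -> a = 0.
Proof. by move=> p0 h; case: (prm h) => // pe; rewrite pe eqxx in p0. Qed.
Lemma primeR (p a : Rg) : p != 0 -> (forall r, a * r * p = 0) -> a = 0.
Proof. by move=> p0 h; case: (prm h) => // pe; rewrite pe eqxx in p0. Qed.


Lemma PL' p q (H : idp p q) (C : Rg) : C * q = C -> p * C = C ->
  (forall r, q * r * p * C * (q * r * p) = 0) -> C = 0.
Proof.
move=> Cq pC h.
have h' : forall r, q * r * p * C * q * r * p = 0.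
  by move=> r; rewrite -(h r) !mulrA.
have lin : forall r s, q * r * p * C * (q * s * p) + q * s * p * C * (q * r * p) = 0.
  move=> r s; have := h (r + s).
  rewrite mulrDr mulrDl !mulrDl !mulrDr h h add0r addr0 => /eqP.
  by rewrite addrC => /eqP.
have key : forall r t, (q * r * p * C) * t * (C * (q * r * p)) = 0.
  move=> r t; have := lin r (r * p * C * q * t).
  rewrite !mulrA h' !mul0r add0r => E.
  have -> : q * r * p * C * t * C * q * r * p =
     q * r * p * C * q * t * p * C * q * r * p by rewrite -{1}Cq -{2}pC !mulrA.
  exact: E.
case: (classic (forall r, q * r * p * C = 0)) => [A1|/not_all_ex_not [r1 n1]].
  apply: (primeL (i_q0 H)) => r.
  by rewrite -pC mulrA A1.
case: (classic (forall r, C * (q * r * p) = 0)) => [A2|/not_all_ex_not [r2 n2]].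
  apply: (primeR (i_p0 H)) => r.
  by rewrite -Cq; have := A2 r; rewrite !mulrA.
exfalso.
have c1 : C * (q * r1 * p) = 0 by case: (prm (key r1)).
have c2 : q * r2 * p * C = 0 by case: (prm (key r2)).
case: (prm (key (r1 + r2))); rewrite mulrDr mulrDl.
  by rewrite mulrDl c2 addr0.
by rewrite mulrDr c1 add0r.
Qed.

Lemma PL p q (H : idp p q) c :
  (forall r, q * r * p * (p * c * q) * (q * r * p) = 0) -> p * c * q = 0.
Proof.
apply: (PL' H); first by rewrite -mulrA (i_qq H).
by rewrite !mulrA (i_pp H).
Qed.

Lemma Epp p q (H : idp p q) : d p = 0 -> forall z, p * d z * p = d (p * z * p).
Proof. by move=> dp z; rewrite T dp !mul0r !mulr0 add0r addr0. Qed.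
Lemma Eppl p q (H : idp p q) : d p = 0 -> forall y z, y * p * d z * p = y * d (p * z * p).
Proof. by move=> dp y z; rewrite -(Epp H dp) !mulrA. Qed.

Lemma dq0 p q (H : idp p q) : d p = 0 -> d q = 0.
Proof.
move=> dp.
have pgp : p * d q * p = 0 by rewrite (Epp H dp) (i_pq H) mul0r d0.
have qgq : q * d q * q = 0.
  apply: lin3; have := congr1 (fun z => q * z * q) (T q q).
  rewrite /=; ns H. by [].
have qgp : q * d q * p = 0.
  apply: (primeL (i_p0 H)) => r.
  have E1 := congr1 (fun z => p * z * p) (T (p + p * r * q) 1).
  have E2 := congr1 (fun z => p * z * p) (T (p + p * r * q) q).
  move: E1 E2; rewrite /= d1; ns H; rewrite ?(Eppl H dp) ?(Epp H dp); ns H; rewrite ?dp ?d0; ns H.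
  by move=> E1; rewrite -E1 addr0 => /esym.
have qgp2 : p * d q * q = 0.
  apply: (primeR (i_p0 H)) => r.
  have E1 := congr1 (fun z => p * z * p) (T (p + q * r * p) 1).
  have E2 := congr1 (fun z => p * z * p) (T (p + q * r * p) q).
  move: E1 E2; rewrite /= d1; ns H; rewrite ?(Eppl H dp) ?(Epp H dp); ns H; rewrite ?dp ?d0; ns H.
  by move=> E1; rewrite -E1 add0r => /esym.
by rewrite (i_dec H (d q)) pgp qgq qgp qgp2 !addr0.
Qed.

Record ip (p q : Rg) : Prop := Ip { ip_i :> idp p q; ip_dp : d p = 0; ip_dq : d q = 0 }.

Lemma ip_sym p q : ip p q -> ip q p.
Proof. by case=> H dp dq; split => //; apply: idp_sym. Qed.

Lemma doff p q (H : ip p q) r : d (q * r * p) = p * d (q * r * p) * q + q * d (q * r * p) * p.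
Proof.
rewrite {1}(i_dec H (d (q * r * p))) (Epp H (ip_dp H)) (Epp (ip_sym H) (ip_dq H)).
by ns H; rewrite d0 add0r addr0.
Qed.

Lemma S5 p q (H : ip p q) x : p * d x * q = p * d (p * x * q) * q.
Proof.
apply/eqP; rewrite -subr_eq0; apply/eqP.
have -> : p * d x * q - p * d (p * x * q) * q = p * (d x - d (p * x * q)) * q.
  by rewrite mulrBr mulrBl.
apply: (PL H) => r.
have E1 := congr1 (fun z => q * z * p) (T (q * r * p) x).
have E2 := congr1 (fun z => q * z * p) (T (q * r * p) (p * x * q)).
move: E1 E2; rewrite /= (doff H r); ns H.
move=> -> /eqP; rewrite (inj_eq (addIr _)) (inj_eq (addrI _)) => /eqP ->.
by rewrite subrr.
Qed.

Lemma Epq p q (H : ip p q) z : p * d z * q = d (p * z * q).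
Proof.
rewrite (S5 H); set w := d (p * z * q).
rewrite [RHS](i_dec H w) /w (Epp H (ip_dp H)) (Epp (ip_sym H) (ip_dq H)).
rewrite (S5 (ip_sym H) (p * z * q)); ns H; rewrite !d0; ns H.
by [].
Qed.

Lemma Epql p q (H : ip p q) y z : y * p * d z * q = y * d (p * z * q).
Proof. by rewrite -(Epq H) !mulrA. Qed.
Lemma rEpp p q (H : ip p q) z : d (p * z * p) = p * d z * p.
Proof. by rewrite (Epp H (ip_dp H)). Qed.
Lemma rEpq p q (H : ip p q) z : d (p * z * q) = p * d z * q.
Proof. by rewrite (Epq H). Qed.

Ltac fw H := rewrite ?(Eppl H (ip_dp H), Epp H (ip_dp H), Epql H, Epq H,
  Eppl (ip_sym H) (ip_dq H), Epp (ip_sym H) (ip_dq H), Epql (ip_sym H), Epq (ip_sym H)).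
Ltac rw H := rewrite ?(rEpp H, rEpq H, rEpp (ip_sym H), rEpq (ip_sym H)).
Ltac dz H := rewrite ?(ip_dp H, ip_dq H, d0, d1).

Lemma dPpq p q (H : ip p q) b : d (p + p * b * q) = p * d b * q.
Proof.
rewrite [LHS](i_dec H (d (p + p * b * q))); fw H; ns H; dz H; ns H; rw H; by [].
Qed.
Lemma dQpq p q (H : ip p q) b : d (q + p * b * q) = p * d b * q.
Proof.
rewrite [LHS](i_dec H (d (q + p * b * q))); fw H; ns H; dz H; ns H; rw H; by [].
Qed.
Lemma d1pq p q (H : ip p q) b : d (1 + p * b * q) = p * d b * q.
Proof.
rewrite -(i_1 H).
rewrite [LHS](i_dec H (d (p + q + p * b * q))); fw H; ns H; dz H; ns H; rw H; by [].
Qed.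

Lemma L2 p q (H : ip p q) a b :
  d (p * a * p * b * q) = p * d a * p * b * q + p * a * p * d b * q.
Proof.
have E := congr1 (fun z => p * z * q) (T (p + p * b * q) (p * a * p)).
move: E; rewrite /= (dPpq H); rw H; rewrite (Epq H); ns H; by [].
Qed.

Lemma L3 p q (H : ip p q) a b :
  d (p * a * q * b * p) = p * d a * q * b * p + p * a * q * d b * p.
Proof.
have E := congr1 (fun z => p * z * p) (T (p + p * a * q) (q * b * p)).
move: E; rewrite /= (dPpq H); rw H; rewrite (Epp H (ip_dp H)); ns H; by [].
Qed.

Lemma L4 p q (H : ip p q) a b :
  d (p * a * q * b * q) = p * d a * q * b * q + p * a * q * d b * q.
Proof.
have E := congr1 (fun z => p * z * q) (T (q + p * a * q) (q * b * q)).
move: E; rewrite /= (dQpq H); rw H; rewrite (Epq H); ns H; by [].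
Qed.

Lemma L1 p q (H : ip p q) a b :
  d (p * a * p * b * p) = p * d a * p * b * p + p * a * p * d b * p.
Proof.
apply/eqP; rewrite -subr_eq0; apply/eqP.
apply: (primeR (i_q0 H)) => c.
have Ea := L2 H a (b * p * c); have Eb := L2 H (a * p * b) c.
move: Ea Eb; ns H; rewrite (Epql H); ns H; rewrite (L2 H b c); ns H.
rewrite (Epp H (ip_dp H) (a * p * b)); ns H.
move=> -> /eqP; rewrite addrA (inj_eq (addIr _)) => /eqP <-.
by rewrite subrr.
Qed.



Lemma A12 p q (H : ip p q) a b :
  d (p * a * q + p * b * q) = p * d a * q + p * d b * q.
Proof.
have E := congr1 (fun z => p * z * q) (T (1 + p * a * q) (p + p * b * q)).
move: E; rewrite /= (d1pq H) (dPpq H); rw H; rewrite (Epq H); ns H.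
by move=> E; rewrite addrC E addrC.
Qed.


Lemma A11 p q (H : ip p q) a b :
  d (p * a * p + p * b * p) = p * d a * p + p * d b * p.
Proof.
apply/eqP; rewrite -subr_eq0; apply/eqP.
apply: (primeR (i_q0 H)) => c.
have E := L2 H (a + b) c; have E2 := A12 H (a * p * c) (b * p * c).
move: E E2; ns H; rewrite (Epp H (ip_dp H) (a + b)) (Epq H (a * p * c)) (Epq H (b * p * c)); ns H.
rewrite (L2 H a c) (L2 H b c).
move=> -> /eqP; rewrite addrACA (inj_eq (addIr _)) => /eqP ->.
by rewrite subrr.
Qed.

Lemma add4 (a1 b1 a2 b2 a3 b3 a4 b4 : Rg) :
  (a1 + b1) + (a2 + b2) + (a3 + b3) + (a4 + b4) = (a1 + a2 + a3 + a4) + (b1 + b2 + b3 + b4).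
Proof. by rewrite (addrACA a1) (addrACA (a1 + a2)) (addrACA (a1 + a2 + a3)). Qed.

Lemma dD p q (H : ip p q) x y : d (x + y) = d x + d y.
Proof.
rewrite [LHS](i_dec H (d (x + y))) (i_dec H (d x)) (i_dec H (d y)).
rewrite (Epp H (ip_dp H) (x + y)) (Epq H (x + y)) (Epq (ip_sym H) (x + y)).
rewrite (Epp (ip_sym H) (ip_dq H) (x + y)); ns H.
rewrite (A11 H) (A12 H) (A12 (ip_sym H)) (A11 (ip_sym H)).
by rewrite add4.
Qed.

Definition Leib x y := d (x * y) = d x * y + x * d y.

Lemma leib_l p q (H : ip p q) x1 x2 y : Leib x1 y -> Leib x2 y -> Leib (x1 + x2) y.
Proof.
rewrite /Leib mulrDl !(dD H) => -> ->.
by rewrite ?mulrDl ?mulrDr addrACA.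
Qed.
Lemma leib_r p q (H : ip p q) x y1 y2 : Leib x y1 -> Leib x y2 -> Leib x (y1 + y2).
Proof.
rewrite /Leib mulrDr !(dD H) => -> ->.
by rewrite ?mulrDl ?mulrDr addrACA.
Qed.

Ltac leibcase H := rewrite /Leib; ns H; rw H; ns H; dz H; ns H;
  rewrite ?(L1 H, L2 H, L3 H, L4 H, L1 (ip_sym H), L2 (ip_sym H), L3 (ip_sym H), L4 (ip_sym H));
  by [].

Lemma leib_piece p q (H : ip p q) x y : Leib (p * x * p) y /\ Leib (p * x * q) y.
Proof.
split; rewrite (i_dec H y);
  (apply: (leib_r H); [apply: (leib_r H); [apply: (leib_r H)|]|]); leibcase H.
Qed.

Lemma alg_norm p q (H : ip p q) :
  (forall x y, d (x + y) = d x + d y) /\ (forall x y, d (x * y) = d x * y + x * d y).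
Proof.
split; first exact: dD H.
move=> x y; rewrite -/(Leib x y) (i_dec H x).
apply: (leib_l H); [apply: (leib_l H); [apply: (leib_l H)|]|].
- exact: (leib_piece H x y).1.
- exact: (leib_piece H x y).2.
- exact: (leib_piece (ip_sym H) x y).2.
- exact: (leib_piece (ip_sym H) x y).1.
Qed.

End Alg.

Ltac ns H := rewrite ?(mulrDl, mulrDr, mulrBl, mulrBr, mulrN, mulNr, mulr0, mul0r,
  mulr1, mul1r, mulrA, i_pp H, i_ppl H, i_pq H, i_pql H, i_pp (idp_sym H),
  i_ppl (idp_sym H), i_pq (idp_sym H), i_pql (idp_sym H), addr0, add0r, subr0,
  sub0r, oppr0, opprK).


Lemma tele (Rg : zmodType) (a b c : Rg) : (a - b) + (b - c) = a - c.
Proof. by rewrite addrA subrK. Qed.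

Lemma sub3 (Rg : zmodType) (a b c a' b' c' : Rg) :
  (a + b + c) - (a' + b' + c') = (a - a') + (b - b') + (c - c').
Proof. by rewrite !opprD addrACA (addrACA a). Qed.

Lemma adT_gen (Rg : pzRingType) (c x y : Rg) :
  c * (x * y * x) - x * y * x * c =
  (c * x - x * c) * y * x + x * (c * y - y * c) * x + x * y * (c * x - x * c).
Proof. by rewrite !(mulrBl, mulrBr, mulrA) tele tele. Qed.
Lemma adL_gen (Rg : pzRingType) (c x y : Rg) :
  c * (x * y) - x * y * c = (c * x - x * c) * y + x * (c * y - y * c).
Proof. by rewrite !(mulrBl, mulrBr, mulrA) tele. Qed.

Lemma add_sum (Rg : zmodType) (D1 D2 : Rg -> Rg) x y :
  D1 (x + y) = D1 x + D1 y -> D2 (x + y) = D2 x + D2 y ->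
  D1 (x + y) + D2 (x + y) = (D1 x + D2 x) + (D1 y + D2 y).
Proof. by move=> -> ->; rewrite addrACA. Qed.
Lemma leib_sum (Rg : pzRingType) (D1 D2 : Rg -> Rg) x y :
  D1 (x * y) = D1 x * y + x * D1 y -> D2 (x * y) = D2 x * y + x * D2 y ->
  D1 (x * y) + D2 (x * y) = (D1 x + D2 x) * y + x * (D1 y + D2 y).
Proof. by move=> -> ->; rewrite mulrDl mulrDr addrACA. Qed.

Theorem alg_main (Rg : pzRingType) (d : Rg -> Rg) (e : Rg) :
  (forall x : Rg, x + x = 0 -> x = 0) ->
  (forall a b : Rg, (forall r, a * r * b = 0) -> a = 0 \/ b = 0) ->
  e * e = e -> e != 0 -> e != 1 ->
  (forall x y, d (x * y * x) = d x * y * x + x * d y * x + x * y * d x) ->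
  (forall x y, d (x + y) = d x + d y) /\ (forall x y, d (x * y) = d x * y + x * d y).
Proof.
move=> tf2 prm ee e0 e1 T.
have [q I] : exists q, idp e q.
  exists (1 - e); split => //.
  - by rewrite mulrBl mul1r mulrBr mulr1 ee subrr subr0.
  - by rewrite mulrBr mulr1 ee subrr.
  - by rewrite mulrBl mul1r ee subrr.
  - by rewrite addrC subrK.
  - by rewrite subr_eq0 eq_sym.
have [c cdef] : exists c, c = q * d e * e - e * d e * q by eexists.
pose ad := fun x => c * x - x * c.
pose d' := fun x => d x - ad x.
have adT : forall x y, ad (x * y * x) = ad x * y * x + x * ad y * x + x * y * ad x.
  by move=> x y; rewrite /ad adT_gen.
have T' : forall x y, d' (x * y * x) = d' x * y * x + x * d' y * x + x * y * d' x.
  move=> x y; rewrite /d' T adT sub3.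
  by rewrite !(mulrBl, mulrBr).
have h1 : e * d e * e = 0.
  apply: (lin3 tf2); have := congr1 (fun z => e * z * e) (T e e).
  rewrite /=; ns I; by [].
have h2 : q * d e * q = 0.
  have := congr1 (fun z => q * z * q) (T e e).
  rewrite /=; ns I; by [].
have d'e : d' e = 0.
  rewrite /d' /ad cdef; ns I.
  rewrite {1}(i_dec I (d e)) h1 h2 add0r addr0.
  by rewrite [X in _ - X]addrC subrr.
have I' : ip d' e q.
  split => //; exact: (dq0 tf2 prm T' I d'e).
have [addD' leibD'] := alg_norm prm T' I'.
have dd' : forall z, d z = d' z + ad z by move=> z; rewrite /d' subrK.
have adL : forall x y, ad (x * y) = ad x * y + x * ad y.
  by move=> x y; rewrite /ad adL_gen.
have adD : forall x y, ad (x + y) = ad x + ad y.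
  by move=> x y; rewrite /ad mulrDr mulrDl opprD (addrACA (c * x)).
split=> x y; rewrite !dd'.
  exact: add_sum.
exact: leib_sum.
Qed.

Unset Implicit Arguments.

Lemma t_m (m : int) : m != 0 -> (1 <= m ^+ 2)%R.
Proof. move=> hm; lia. Qed.

Lemma t_m2 (R : realType) (m : int) : m != 0 -> 1 <= ((m ^+ 2)%:~R : R).
Proof. by move=> hm; rewrite ler1z t_m. Qed.

Lemma liminf0_ex (R : realType) (v : nat -> R) :
  limn_einf (fun k => (v k)%:E) = 0%E ->
  forall N eps, 0 < eps -> exists2 k, (N <= k)%N & v k < eps.
Proof.
move=> h N eps e0.
have : (einfs (fun k => (v k)%:E) N <= 0)%E.
  rewrite -h limn_einf_lim.
  have := @cvg_einfs_sup R (fun k => (v k)%:E); move/cvg_lim => -> //.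
  by apply: ereal_sup_ubound; exists N.
move=> H0.
have : (einfs (fun k => (v k)%:E) N < eps%:E)%E.
  by apply: le_lt_trans H0 _; rewrite lte_fin.
move=> /ereal_inf_lt [y [k /= Nk <-]].
by rewrite lte_fin => vk; exists k.
Qed.

Lemma cvg_liminf0 (R : realType) (V : normedModType R) (E : V) (Ek : nat -> V)
  (v : nat -> R) :
  Ek @ \oo --> E -> (forall k, `|Ek k| <= v k) ->
  limn_einf (fun k => (v k)%:E) = 0%E -> E = 0.
Proof.
move=> cE bd h; apply/eqP; rewrite -normr_eq0 eq_le normr_ge0 andbT.
apply/ler_addgt0Pr => eps e0; rewrite add0r.
have e20 : 0 < eps / 2 by rewrite divr_gt0.
have := (cvgrPdist_lt _ _).1 cE _ e20.
move=> [N _ HN].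
have [k Nk vk] := @liminf0_ex _ _ h N _ e20.
have := HN k Nk; rewrite /= => Hk.
rewrite -(subrK (Ek k) E) (le_trans (ler_normD _ _)) //.
rewrite [eps](splitr eps) lerD // ltW //.
  exact: le_lt_trans (bd k) vk.
Qed.



Lemma cvg_sub (R : realType) (V : normedModType R) (u : nat -> V) (l : V) (c : nat) :
  (0 < c)%N -> u @ \oo --> l -> (fun k => u (c * k)%N) @ \oo --> l.
Proof.
move=> c0 ul; apply/cvgrPdist_lt => e e0.
have [N _ HN] := (cvgrPdist_lt _ _).1 ul e e0.
exists N => // k /= Nk; apply: HN; rewrite /= (leq_trans Nk) // leq_pmull //.
Qed.


Lemma zmod_aux (V : zmodType) (P Q a b : V) : (P - a - Q) - (P - b - Q) = b - a.
Proof. by rewrite !opprD !opprK addrACA addNr addr0 addrACA subrr add0r addrC. Qed.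

Section Ana.
Variables (R : realType) (X : completeNormedModType R) (A : banach_alg X) (h : X -> X).
Variables (phi : X -> X -> R) (m : int).
Hypothesis hodd : odd_map h.
Hypothesis hm : m != 0.
Hypothesis Hphi : forall x y : X,
     `|h (x + y *~ m) + h (x - y *~ m) - h x *+ 2 + h y *~ (2 * m ^+ 2)
        - h (y *+ 2) *~ (m ^+ 2)| <= phi x y.

Lemma tfX (x : X) : x + x = 0 -> x = 0.
Proof.
move=> h2; have : 2%:R *: x = 0 :> X by rewrite scaler_nat mulr2n.
by move/eqP; rewrite scaler_eq0 pnatr_eq0 /= => /eqP.
Qed.

Lemma h0 : h 0 = 0.
Proof. by apply: tfX; have := hodd 0; rewrite oppr0 => {1}->; rewrite addNr. Qed.

Lemma hbound w : `|h (w *+ 2) - h w *+ 2| <= phi 0 w.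
Proof.
have := Hphi 0 w; rewrite add0r sub0r hodd addrN h0 mul0rn subr0 add0r.
rewrite mulrzA -mulrzBl -scaler_int normrZ => H.
apply: le_trans H; rewrite distrC -[X in X <= _]mul1r.
apply: ler_wpM2r => //.
by apply: le_trans (t_m2 R m hm) _; apply: ler_norm.
Qed.
Hypothesis hphi0 : forall x y, 0 <= phi x y.
Hypothesis HPhi : forall x : X,
     (\sum_(0 <= k <oo) ((2 ^- k * phi 0 ((2 ^+ k : R) *: x))%:E) < +oo)%E.

Definition a n z := (2 ^- n : R) *: h ((2 ^+ n : R) *: z).

Lemma a_diff n z : `|a n.+1 z - a n z| <= 2 ^- n * phi 0 ((2 ^+ n : R) *: z).
Proof.
rewrite /a; set w := (2 ^+ n : R) *: z.
have -> : (2 ^+ n.+1 : R) *: z = w *+ 2 by rewrite exprS -scalerA -scaler_nat.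
have e : (2 ^- n : R) = 2 ^- n.+1 * 2.
  by rewrite exprS invfM mulrAC mulVf ?mul1r // pnatr_eq0.
rewrite {1}e -scalerA scaler_nat -scalerBr normrZ ger0_norm; last first.
  by rewrite invr_ge0 exprn_ge0.
rewrite e -mulrA; apply: ler_wpM2l; first by rewrite invr_ge0 exprn_ge0.
apply: le_trans (hbound w) _.
by rewrite ler_peMl // ler1n.
Qed.

Lemma a_cvg z : cvgn (fun n => a n z).
Proof.
pose u := fun k => 2 ^- k * phi 0 ((2 ^+ k : R) *: z).
have u0 : forall k, 0 <= u k.
  by move=> k; rewrite mulr_ge0 // invr_ge0 exprn_ge0.
have cu : cvgn (series u) := nnseries_is_cvg u0 (HPhi z).
pose b := fun k => a k.+1 z - a k z.
have cb : cvgn (series b).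
  apply: normed_cvg.
  exact: series_le_cvg (fun n => normr_ge0 _) u0 (fun n => a_diff n z) cu.
have -> : (fun n => a n z) = (fun n => a 0 z + series b n).
  apply/funext => n; rewrite /series /= telescope_sumr // addrC subrK //.
exact: (is_cvgD (is_cvg_cst _) cb).
Qed.

Lemma bmulNl (y z : X) : bmul A (- y) z = - bmul A y z.
Proof. by rewrite -scaleN1r bmulZl scaleN1r. Qed.
Lemma bmulNr (y z : X) : bmul A z (- y) = - bmul A z y.
Proof. by rewrite -scaleN1r bmulZr scaleN1r. Qed.
Lemma bmulBl (x y z : X) : bmul A (x - y) z = bmul A x z - bmul A y z.
Proof. by rewrite bmulDl bmulNl. Qed.
Lemma bmulBr (x y z : X) : bmul A z (x - y) = bmul A z x - bmul A z y.
Proof. by rewrite bmulDr bmulNr. Qed.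

Lemma cvg_bmulr (u : nat -> X) l c : u @ \oo --> l ->
  (fun n => bmul A (u n) c) @ \oo --> bmul A l c.
Proof.
move=> ul; apply/cvgrPdist_lt => e e0.
have c1 : 0 < `|c| + 1 by rewrite ltr_wpDl.
have H0 := (cvgrPdist_lt _ _).1 ul (e / (`|c| + 1)) (divr_gt0 e0 c1).
near=> n.
have H : `|l - u n| < e / (`|c| + 1).
  near: n. exact: H0.
rewrite -bmulBl.
apply: le_lt_trans (bnormM_le _ _ _) _.
rewrite ltr_pdivlMr // in H; apply: le_lt_trans _ H.
by rewrite ler_wpM2l // lerDl.
Unshelve. all: by end_near. Qed.

Lemma cvg_bmull (u : nat -> X) l c : u @ \oo --> l ->
  (fun n => bmul A c (u n)) @ \oo --> bmul A c l.
Proof.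
move=> ul; apply/cvgrPdist_lt => e e0.
have c1 : 0 < `|c| + 1 by rewrite ltr_wpDl.
have H0 := (cvgrPdist_lt _ _).1 ul (e / (`|c| + 1)) (divr_gt0 e0 c1).
near=> n.
have H : `|l - u n| < e / (`|c| + 1).
  near: n. exact: H0.
rewrite -bmulBr.
apply: le_lt_trans (bnormM_le _ _ _) _.
rewrite ltr_pdivlMr // in H; apply: le_lt_trans _ H.
by rewrite mulrC ler_wpM2l // lerDl.
Unshelve. all: by end_near. Qed.


Variable psi : X -> X -> R.
Hypothesis Hpsi : forall x y : X,
     `|h (bmul A (bmul A x y) x) - bmul A (bmul A (h x) y) x
       - bmul A (bmul A x (h y)) x - bmul A (bmul A x y) (h x)| <= psi x y.
Hypothesis Hl1 : forall x y : X,
     limn_einf (fun k => ((2 ^- (3 * k)%N)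
                 * psi ((2 ^+ k : R) *: x) ((2 ^+ k : R) *: y))%:E) = 0%E.
Hypothesis Hl2 : forall x y : X,
     limn_einf (fun k => ((2 ^- (2 * k)%N)
                 * psi ((2 ^+ k : R) *: x) y)%:E) = 0%E.

Lemma Ek1 x y k :
  let c := (2 ^+ k : R) in
  (2 ^- (3 * k)%N : R) *: (h (bmul A (bmul A (c *: x) (c *: y)) (c *: x))
     - bmul A (bmul A (h (c *: x)) (c *: y)) (c *: x)
     - bmul A (bmul A (c *: x) (h (c *: y))) (c *: x)
     - bmul A (bmul A (c *: x) (c *: y)) (h (c *: x)))
  = a (3 * k) (bmul A (bmul A x y) x) - bmul A (bmul A (a k x) y) x
     - bmul A (bmul A x (a k y)) x - bmul A (bmul A x y) (a k x).
Proof.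
move=> c; rewrite /a !(bmulZl, bmulZr) !scalerBr !scalerA.
have c0 : c != 0 by rewrite expf_neq0 // pnatr_eq0.
have E3 : (2 ^+ (3 * k) : R) = c * (c * c).
  by rewrite /c -!exprD; congr (_ ^+ _); lia.
rewrite E3; congr (_ - _ - _ - _); first by rewrite mulrA.
all: by rewrite -/c; congr (_ *: _); field.
Qed.

Lemma Ek2 x y k :
  let c := (2 ^+ k : R) in
  (2 ^- (2 * k)%N : R) *: (h (bmul A (bmul A (c *: x) y) (c *: x))
     - bmul A (bmul A (h (c *: x)) y) (c *: x)
     - bmul A (bmul A (c *: x) (h y)) (c *: x)
     - bmul A (bmul A (c *: x) y) (h (c *: x)))
  = a (2 * k) (bmul A (bmul A x y) x) - bmul A (bmul A (a k x) y) x
     - bmul A (bmul A x (h y)) x - bmul A (bmul A x y) (a k x).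
Proof.
move=> c; rewrite /a !(bmulZl, bmulZr) !scalerBr !scalerA.
have c0 : c != 0 by rewrite expf_neq0 // pnatr_eq0.
have E2 : (2 ^+ (2 * k) : R) = c * c.
  by rewrite /c -!exprD; congr (_ ^+ _); lia.
rewrite E2; congr (_ - _ - _ - _).
- by rewrite -/c; congr (_ *: _); field.
- by rewrite mulVf ?scale1r ?mulf_neq0.
- by rewrite -/c; congr (_ *: _); field.
Qed.

Definition D z := limn (fun n => a n z).
Lemma Dcvg z : (fun n => a n z) @ \oo --> D z.
Proof. exact: a_cvg z. Qed.

Lemma TD x y : D (bmul A (bmul A x y) x) - bmul A (bmul A (D x) y) x
   - bmul A (bmul A x (D y)) x - bmul A (bmul A x y) (D x) = 0.
Proof.
apply: (@cvg_liminf0 R X _ (fun k => (2 ^- (3 * k)%N : R) *: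
     (h (bmul A (bmul A ((2 ^+ k : R) *: x) ((2 ^+ k : R) *: y)) ((2 ^+ k : R) *: x))
     - bmul A (bmul A (h ((2 ^+ k : R) *: x)) ((2 ^+ k : R) *: y)) ((2 ^+ k : R) *: x)
     - bmul A (bmul A ((2 ^+ k : R) *: x) (h ((2 ^+ k : R) *: y))) ((2 ^+ k : R) *: x)
     - bmul A (bmul A ((2 ^+ k : R) *: x) ((2 ^+ k : R) *: y)) (h ((2 ^+ k : R) *: x))))
   _ _ _ (Hl1 x y)).
- rewrite (_ : (fun k => _) = (fun k => a (3 * k) (bmul A (bmul A x y) x)
     - bmul A (bmul A (a k x) y) x
     - bmul A (bmul A x (a k y)) x - bmul A (bmul A x y) (a k x))); last first.
    by apply/funext => k; exact: Ek1.
  apply: cvgB; [apply: cvgB; [apply: cvgB|]|].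
  + exact: (@cvg_sub R X (fun n => a n _) _ 3 isT (Dcvg _)).
  + by apply: cvg_bmulr; apply: cvg_bmulr; exact: Dcvg.
  + by apply: cvg_bmulr; apply: cvg_bmull; exact: Dcvg.
  + by apply: cvg_bmull; exact: Dcvg.
- move=> k; rewrite normrZ ger0_norm ?invr_ge0 ?exprn_ge0 //.
  by apply: ler_wpM2l; [rewrite invr_ge0 exprn_ge0 | exact: Hpsi].
Qed.

Lemma TD2 x y : D (bmul A (bmul A x y) x) - bmul A (bmul A (D x) y) x
   - bmul A (bmul A x (h y)) x - bmul A (bmul A x y) (D x) = 0.
Proof.
apply: (@cvg_liminf0 R X _ (fun k => (2 ^- (2 * k)%N : R) *:
     (h (bmul A (bmul A ((2 ^+ k : R) *: x) y) ((2 ^+ k : R) *: x))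
     - bmul A (bmul A (h ((2 ^+ k : R) *: x)) y) ((2 ^+ k : R) *: x)
     - bmul A (bmul A ((2 ^+ k : R) *: x) (h y)) ((2 ^+ k : R) *: x)
     - bmul A (bmul A ((2 ^+ k : R) *: x) y) (h ((2 ^+ k : R) *: x))))
   _ _ _ (Hl2 x y)).
- rewrite (_ : (fun k => _) = (fun k => a (2 * k) (bmul A (bmul A x y) x)
     - bmul A (bmul A (a k x) y) x
     - bmul A (bmul A x (h y)) x - bmul A (bmul A x y) (a k x))); last first.
    by apply/funext => k; exact: Ek2.
  apply: cvgB; [apply: cvgB; [apply: cvgB|]|].
  + exact: (@cvg_sub R X (fun n => a n _) _ 2 isT (Dcvg _)).
  + by apply: cvg_bmulr; apply: cvg_bmulr; exact: Dcvg.
  + exact: cvg_cst.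
  + by apply: cvg_bmull; exact: Dcvg.
- move=> k; rewrite normrZ ger0_norm ?invr_ge0 ?exprn_ge0 //.
  by apply: ler_wpM2l; [rewrite invr_ge0 exprn_ge0 | exact: Hpsi].
Qed.

Lemma hD y : h y = D y.
Proof.
have E1 := TD (bone A) y; have E2 := TD2 (bone A) y.
rewrite !bmul1x !bmulx1 in E1 E2.
have := zmod_aux X (D y - bmul A (D (bone A)) y) (bmul A y (D (bone A))) (h y) (D y).
rewrite E2 E1 subr0 => /esym/eqP; rewrite subr_eq0 => /eqP.
by move=> ->.
Qed.

Lemma hT x y : h (bmul A (bmul A x y) x) =
  bmul A (bmul A (h x) y) x + bmul A (bmul A x (h y)) x + bmul A (bmul A x y) (h x).
Proof.
have E := TD x y; rewrite -!hD in E.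
by apply/eqP; rewrite -subr_eq0 !opprD !addrA E.
Qed.

End Ana.


Theorem theorem3p1 (R : realType) (X : completeNormedModType R)
  (A : banach_alg X) (h : X -> X) (phi psi : X -> X -> R) (m : int) :
  prime_alg A ->
  has_nontrivial_idempotent A ->
  odd_map h ->
  (forall x y, 0 <= phi x y) ->
  (forall x y, 0 <= psi x y) ->
  m != 0 -> (2 %| m)%Z ->
  (forall x y : X,
     `|h (bmul A (bmul A x y) x) - bmul A (bmul A (h x) y) x
       - bmul A (bmul A x (h y)) x - bmul A (bmul A x y) (h x)| <= psi x y) ->
  (forall x y : X,
     `|h (x + y *~ m) + h (x - y *~ m) - h x *+ 2 + h y *~ (2 * m ^+ 2)
        - h (y *+ 2) *~ (m ^+ 2)| <= phi x y) ->
  (forall x : X,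
     (\sum_(0 <= k <oo) ((2 ^- k * phi 0 ((2 ^+ k : R) *: x))%:E) < +oo)%E) ->
  (forall x y : X,
     limn_einf (fun k => ((2 ^- (3 * k)%N)
                 * psi ((2 ^+ k : R) *: x) ((2 ^+ k : R) *: y))%:E) = 0%E) ->
  (forall x y : X,
     limn_einf (fun k => ((2 ^- (2 * k)%N)
                 * psi ((2 ^+ k : R) *: x) y)%:E) = 0%E) ->
  derivation A h.
Proof.
move=> [one0 prm] [e [ee [e0 e1]]] hodd hphi0 hpsi0 hm hm2 Hpsi Hphi HPhi Hl1 Hl2.
have hT' := @hT R X A h phi m hodd hm Hphi hphi0 HPhi psi Hpsi Hl1 Hl2.
have [H1 H2] := @alg_main (Xr A) h e (@tfX R X) prm ee e0 e1 hT'.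
by split.
Qed.
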